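(* Let $\boldsymbol{\mu}$ be a bandit model with $\mu_1>\mu_a$ for all $a\neq1$ and let $c_1,\dots,c_K>0$. For every $\boldsymbol{w}\in\Sigma_K$, \[ \inf_{\boldsymbol{\lambda}\in\mathrm{Alt}(\boldsymbol{\mu})}\sum_{a=1}^K\frac{w_a}{c_a}d(\mu_a,\lambda_a)=\min_{a\neq1}\left(\frac{w_1}{c_1}+\frac{w_a}{c_a}\right)I_{\frac{w_1/c_1}{w_1/c_1+w_a/c_a}}(\mu_1,\mu_a). \] Consequently \[ T^*(\boldsymbol{\mu})^{-1}=\sup_{\boldsymbol{w}\in\Sigma_K}\min_{a\neq1}\left(\frac{w_1}{c_1}+\frac{w_a}{c_a}\right)I_{\frac{w_1/c_1}{w_1/c_1+w_a/c_a}}(\mu_1,\mu_a),\qquad \boldsymbol{w}^*(\boldsymbol{\mu})=\arg\max_{\boldsymbol{w}\in\Sigma_K}\min_{a\neq1}\left(\frac{w_1}{c_1}+\frac{w_a}{c_a}\right)I_{\frac{w_1/c_1}{w_1/c_1+w_a/c_a}}(\mu_1,\mu_a). \]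
   Context: Rewards of the arms belong to a one-parameter natural exponential family $\{h(x)\exp(\theta_\mu x-b(\theta_\mu))\}$ parametrized by its mean $\mu$; $d(\mu,\mu')$ is the KL divergence between the members with means $\mu,\mu'$. $\Sigma_K$ is the probability simplex in $\mathbb{R}^K$. $\mathrm{Alt}(\boldsymbol{\mu})$ is the set of mean vectors $\boldsymbol{\lambda}$ of the family whose (unique) best arm differs from arm $1$, i.e. $\mathrm{Alt}(\boldsymbol{\mu})=\bigcup_{a\neq1}\{\boldsymbol{\lambda}:\lambda_a>\lambda_1\}$. For $\alpha\in[0,1]$, $I_\alpha(x,y)=\alpha\,d(x,\alpha x+(1-\alpha)y)+(1-\alpha)\,d(y,\alpha x+(1-\alpha)y)$. $T^*(\boldsymbol{\mu})^{-1}=\sup_{\boldsymbol{w}\in\Sigma_K}\inf_{\boldsymbol{\lambda}\in\mathrm{Alt}(\boldsymbol{\mu})}\sum_a\frac{w_a}{c_a}d(\mu_a,\lambda_a)$ and $\boldsymbol{w}^*(\boldsymbol{\mu})$ is the maximizing $\boldsymbol{w}$. *)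

(* Defs.v *)
From HB Require Import structures.
From mathcomp Require Import all_boot all_order all_algebra.
From mathcomp Require Import all_classical all_reals all_analysis.
Set Implicit Arguments. Unset Strict Implicit. Unset Printing Implicit Defensive.
Import Order.TTheory GRing.Theory Num.Theory.
Import numFieldNormedType.Exports.
Local Open Scope classical_set_scope.
Local Open Scope ring_scope.

(* A one-parameter (non-degenerate) natural exponential family, described by
   its natural parameter space Theta (a nonempty open interval) and its
   log-partition function b, differentiable on Theta with strictly increasing
   derivative b' (the mean map theta |-> mu = b'(theta)). *)
Record NEF (R : realType) := {
  nef_Theta : set R;
  nef_b : R -> R;
  nef_open : open nef_Theta;
  nef_itv : is_interval nef_Theta;
  nef_ne : nef_Theta !=set0;
  nef_derivable : forall t, nef_Theta t -> derivable nef_b t 1;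
  nef_strict : forall s t, nef_Theta s -> nef_Theta t -> s < t ->
     derive1 nef_b s < derive1 nef_b t }.

Section NEFdefs.
Context {R : realType} (F : NEF R).

Definition nef_means : set R := derive1 (nef_b F) @` nef_Theta F.

Definition nef_theta (mu : R) : R :=
  xget 0 [set t | nef_Theta F t /\ derive1 (nef_b F) t = mu].

Definition kl (mu mu' : R) : R :=
  nef_b F (nef_theta mu') - nef_b F (nef_theta mu)
  - mu * (nef_theta mu' - nef_theta mu).

Definition Ialpha (alpha x y : R) : R :=
  alpha * kl x (alpha * x + (1 - alpha) * y)
  + (1 - alpha) * kl y (alpha * x + (1 - alpha) * y).

Variable n : nat.  (* K = n.+1 arms, arm 1 is ord0 *)

Definition simplex (w : 'I_n.+1 -> R) : Prop :=
  (forall a, 0 <= w a) /\ \sum_a w a = 1.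

Definition Alt (lam : 'I_n.+1 -> R) : Prop :=
  (forall a, nef_means (lam a)) /\ (exists2 a, a != ord0 & lam ord0 < lam a).

Definition alt_obj (c mu w : 'I_n.+1 -> R) : \bar R :=
  ereal_inf [set (\sum_a (w a / c a) * kl (mu a) (lam a))%:E | lam in Alt].

Definition Tstar_inv (c mu : 'I_n.+1 -> R) : \bar R :=
  ereal_sup [set alt_obj c mu w | w in simplex].

Definition pair_obj (c mu w : 'I_n.+1 -> R) : \bar R :=
  \big[Order.min/+oo%E]_(a | a != ord0)
     ((w ord0 / c ord0 + w a / c a) *
      Ialpha ((w ord0 / c ord0) / (w ord0 / c ord0 + w a / c a))
             (mu ord0) (mu a))%:E.

Definition is_argmax (G : ('I_n.+1 -> R) -> \bar R) (w : 'I_n.+1 -> R) : Prop :=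
  simplex w /\ G w = ereal_sup [set G v | v in simplex].

End NEFdefs.

(* Main.v *)
Require Import Defs.
From HB Require Import structures.
From mathcomp Require Import all_boot all_order all_algebra.
From mathcomp Require Import all_classical all_reals all_analysis.
From mathcomp Require Import ring lra.
Set Implicit Arguments. Unset Strict Implicit. Unset Printing Implicit Defensive.
Import Order.TTheory GRing.Theory Num.Theory.
Import numFieldNormedType.Exports.
Local Open Scope classical_set_scope.
Local Open Scope ring_scope.

Section H.
Context {R : realType} (F : NEF R).
Local Notation D := (nef_Theta F).
Local Notation b := (nef_b F).
Local Notation b' := (derive1 (nef_b F)).

Lemma theta_spec m : nef_means F m -> D (nef_theta F m) /\ b' (nef_theta F m) = m.
Proof.
case=> t Dt <-; have := @xgetPex R 0 [set u | D u /\ b' u = b' t].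
by apply; exists t.
Qed.

Lemma b'_le s t : D s -> D t -> b' s <= b' t -> s <= t.
Proof.
move=> Ds Dt h; case: (leP s t) => // ts.
by have := nef_strict Dt Ds ts; rewrite ltNge h.
Qed.

Lemma b'_inj s t : D s -> D t -> b' s = b' t -> s = t.
Proof.
move=> Ds Dt e; apply/eqP; rewrite eq_le (b'_le Ds Dt) ?e // (b'_le Dt Ds) ?e //.
Qed.

Lemma theta_b' t : D t -> nef_theta F (b' t) = t.
Proof.
move=> Dt; have [Dx ex] := theta_spec (ex_intro2 _ _ t Dt erefl).
exact: b'_inj.
Qed.

Lemma D_seg s t u : D s -> D t -> s <= u <= t -> D u.
Proof. move=> Ds Dt su; exact: (@nef_itv R F s t Ds Dt u su). Qed.

Lemma convex_b s t : D s -> D t -> b' s * (t - s) <= b t - b s.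
Proof.
move=> Ds Dt.
have key : forall x y, D x -> D y -> x < y -> exists2 c, c \in `]x, y[ & b y - b x = b' c * (y - x).
  move=> x y Dx Dy xy; apply: MVT => //.
    move=> z zi; have Dz : D z by move: zi; rewrite in_itv /= => /andP[? ?]; apply: (D_seg Dx Dy); rewrite !ltW.
    rewrite derive1E; exact/derivableP/(nef_derivable Dz).
  apply: (@derivable_within_continuous R R b `[x, y]) => z zi.
  have Dz : D z by move: zi; rewrite in_itv /= => zi; exact: (D_seg Dx Dy zi).
  exact: nef_derivable.
case: (ltgtP s t) => [st|ts|<-]; last by rewrite !subrr mulr0.
- have [c ci ->] := key _ _ Ds Dt st.
  have Dc : D c by apply: (D_seg Ds Dt); rewrite !ltW // (itvP ci).
  apply: ler_wpM2r; first by rewrite subr_ge0 ltW.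
  by apply/ltW/nef_strict => //; rewrite (itvP ci).
- have [c ci e] := key _ _ Dt Ds ts.
  have Dc : D c by apply: (D_seg Dt Ds); rewrite !ltW // (itvP ci).
  have : b' c < b' s by apply/nef_strict => //; rewrite (itvP ci).
  have : 0 < s - t by rewrite subr_gt0.
  move: e; set u := b' c; set v := b' s; move=> e h1 h2.
  have -> : b t - b s = - (b s - b t) by ring.
  rewrite e -(opprB s t) !mulrN lerN2; apply: ler_wpM2r; [by rewrite subr_ge0 ltW | exact: ltW].
Qed.

End H.

Lemma deriv_right_ge {R : realType} (f : R -> R) (x r m : R) : derivable f x 1 -> 0 < r ->
  (forall h, 0 < h < r -> m * h <= f (h + x) - f x) -> m <= derive1 f x.
Proof.
move=> df r0 H; rewrite derive1E ['D_1 f x]cvg_at_rightE //.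
apply: limr_ge.
  rewrite -(cvg_at_rightE (fun h : R => h^-1 *: ((f \o shift x) _ - f x))) //.
  apply: cvg_trans df; apply: cvg_app.
  move=> A [e egt0 Ae]; exists e => // y ye ygt0; apply: Ae => //.
  exact/lt0r_neq0.
near=> h.
have h0 : 0 < h by near: h; exists 1 => /=.
have hr : h < r.
  near: h; exists r => //= y; rewrite /ball /= sub0r normrN => /(le_lt_trans (ler_norm _)) //.
rewrite /= [_%:A]mulr1; change (m <= h^-1 * (f (h + x) - f x)).
rewrite mulrC ler_pdivlMr //.
by apply: H; apply/andP; split.
Unshelve. all: by end_near. Qed.

Lemma deriv_left_le {R : realType} (f : R -> R) (x r m : R) : derivable f x 1 -> 0 < r ->
  (forall h, - r < h < 0 -> m * h <= f (h + x) - f x) -> derive1 f x <= m.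
Proof.
move=> df r0 H; rewrite derive1E ['D_1 f x]cvg_at_leftE //.
apply: limr_le.
  rewrite -(cvg_at_leftE (fun h : R => h^-1 *: ((f \o shift x) _ - f x))) //.
  apply: cvg_trans df; apply: cvg_app.
  move=> A [e egt0 Ae]; exists e => // y ye ygt0; apply: Ae => //.
  exact/ltr0_neq0.
near=> h.
have h0 : h < 0 by near: h; exists 1 => /=.
have hr : - r < h.
  near: h; exists r => //= y; rewrite /ball /= sub0r normrN => /ltr_normlP [? ?] //.
  by rewrite ltrNl.
rewrite /= [_%:A]mulr1; change (h^-1 * (f (h + x) - f x) <= m).
rewrite mulrC ler_ndivrMr //.
by apply: H; rewrite h0 hr.
Unshelve. all: by end_near. Qed.

Section H4.
Context {R : realType} (F : NEF R).
Local Notation D := (nef_Theta F).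
Local Notation b := (nef_b F).
Local Notation b' := (derive1 (nef_b F)).

Lemma means_itv m1 m2 m : nef_means F m1 -> nef_means F m2 -> m1 <= m <= m2 ->
  nef_means F m.
Proof.
move=> M1 M2 /andP[h1 h2].
case: (eqVneq m m1) => [->//|n1]; case: (eqVneq m m2) => [->//|n2].
have l1 : m1 < m by rewrite lt_def n1 h1.
have l2 : m < m2 by rewrite lt_def eq_sym n2 h2.
case: M1 => s1 D1 e1; case: M2 => s2 D2 e2.
have s12 : s1 <= s2 by apply: (b'_le D1 D2); rewrite e1 e2 (le_trans h1 h2).
have s12' : s1 < s2.
  rewrite lt_neqAle s12 andbT; apply/eqP => e; move: e1; rewrite e e2 => e12.
  by move: l1; rewrite -e12 => /(lt_trans l2); rewrite ltxx.
pose g u := b u - m * u.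
have Dg z : z \in `[s1, s2] -> D z.
  by rewrite in_itv /= => zi; apply: (D_seg D1 D2 zi).
have dg z : z \in `[s1, s2] -> derivable b z 1.
  by move=> /Dg Dz; exact: nef_derivable.
have cg : {within `[s1, s2], continuous g}.
  apply: (@derivable_within_continuous R R g `[s1, s2]) => z zi.
  apply: derivableB; first exact: dg.
  apply: derivableM; [exact: derivable_cst | exact: derivable_id].
have [c ci cmin] := EVT_min s12 cg.
have /andP[c1 c2] : s1 <= c <= s2 by move: ci; rewrite in_itv.
have key : forall t, s1 <= t <= s2 -> m * (t - c) <= b t - b c.
  move=> t ti; have : g c <= g t by apply: cmin; rewrite in_itv.
  rewrite /g mulrBr => H'; lra.
have Hr : c < s2 -> m <= b' c.
  move=> cs2; apply: (@deriv_right_ge R b c (s2 - c) m).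
  - by apply: dg; rewrite in_itv /= c1 c2.
  - by rewrite subr_gt0.
  move=> h /andP[h0 hr]; have := key (h + c); rewrite addrK; apply.
  apply/andP; split; lra.
have Hl : s1 < c -> b' c <= m.
  move=> s1c; apply: (@deriv_left_le R b c (c - s1) m).
  - by apply: dg; rewrite in_itv /= c1 c2.
  - by rewrite subr_gt0.
  move=> h /andP[hr h0]; have := key (h + c); rewrite addrK; apply.
  apply/andP; split; lra.
have cs2 : c < s2.
  rewrite lt_neqAle c2 andbT; apply/eqP => ec.
  have : b' c <= m by apply: Hl; rewrite ec; lra.
  by rewrite ec e2 leNgt l2.
have s1c : s1 < c.
  rewrite lt_neqAle c1 andbT; apply/eqP => ec.
  have : m <= b' c by apply: Hr; rewrite -ec; lra.
  by rewrite -ec e1 leNgt l1.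
exists c; first by apply: Dg; rewrite in_itv /= c1 c2.
by apply/eqP; rewrite eq_le Hl // Hr.
Qed.
End H4.


Section K.
Context {R : realType} (F : NEF R).
Local Notation D := (nef_Theta F).
Local Notation b := (nef_b F).
Local Notation b' := (derive1 (nef_b F)).
Local Notation th := (nef_theta F).
Local Notation kl := (kl F).
Local Notation M := (nef_means F).

Lemma kl_ge0 m x : M m -> M x -> 0 <= kl m x.
Proof.
move=> /theta_spec [Dm em] /theta_spec [Dx ex].
have := convex_b Dm Dx; rewrite em /Defs.kl => H; lra.
Qed.

Lemma theta_le x y : M x -> M y -> x <= y -> th x <= th y.
Proof.
move=> /theta_spec [Dx ex] /theta_spec [Dy ey] xy.
by apply: (b'_le Dx Dy); rewrite ex ey.
Qed.

Lemma kl_diff m x y : M x -> M y -> (x - m) * (th y - th x) <= kl m y - kl m x.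
Proof.
move=> /theta_spec [Dx ex] /theta_spec [Dy ey].
have := convex_b Dx Dy; rewrite ex /Defs.kl mulrBl => H; lra.
Qed.

Lemma kl_up m x y : M x -> M y -> m <= x <= y -> kl m x <= kl m y.
Proof.
move=> Mx My /andP[mx xy]; rewrite -subr_ge0; apply: le_trans (kl_diff m Mx My).
by apply: mulr_ge0; rewrite subr_ge0 // theta_le.
Qed.

Lemma kl_down m x y : M x -> M y -> y <= x <= m -> kl m x <= kl m y.
Proof.
move=> Mx My /andP[yx xm]; rewrite -subr_ge0; apply: le_trans (kl_diff m Mx My).
apply: mulr_le0; rewrite subr_le0 // theta_le //.
Qed.

Lemma kl_id p q m0 ma mb x : p * m0 + q * ma = (p + q) * mb ->
  p * kl m0 x + q * kl ma x = p * kl m0 mb + q * kl ma mb + (p + q) * kl mb x.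
Proof.
move=> E; apply/eqP; rewrite -subr_eq0.
have -> : p * kl m0 x + q * kl ma x - (p * kl m0 mb + q * kl ma mb + (p + q) * kl mb x)
  = ((p + q) * mb - (p * m0 + q * ma)) * (th x - th mb) by rewrite /Defs.kl; ring.
by rewrite E subrr mul0r.
Qed.

Lemma kl_self m : kl m m = 0.
Proof. by rewrite /Defs.kl; ring. Qed.

Lemma kl_b' m t : D t -> kl m (b' t) = b t - b (th m) - m * (t - th m).
Proof. by move=> Dt; rewrite /Defs.kl theta_b'. Qed.

Lemma alpha01 (p q : R) : 0 <= p -> 0 <= q -> 0 <= p / (p + q) <= 1.
Proof.
move=> p0 q0; case: (eqVneq (p + q) 0) => [->|pq]; first by rewrite invr0 mulr0 lexx ler01.
have pq0 : 0 < p + q by rewrite lt_def pq addr_ge0.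
rewrite divr_ge0 ?addr_ge0 //= ler_pdivrMr // mul1r; lra.
Qed.

Lemma Ialpha_val (p q m0 ma : R) : 0 <= p -> 0 <= q ->
  let mb := p / (p + q) * m0 + (1 - p / (p + q)) * ma in
  (p + q) * Ialpha F (p / (p + q)) m0 ma = p * kl m0 mb + q * kl ma mb /\
  p * m0 + q * ma = (p + q) * mb.
Proof.
move=> p0 q0 mb; rewrite /Ialpha -/mb.
case: (eqVneq (p + q) 0) => [pq|pq].
  have p00 : p = 0 by lra.
  have q00 : q = 0 by lra.
  by rewrite pq p00 q00 !mul0r addr0.
split; rewrite /mb; field; exact: pq.
Qed.

Lemma mb_between (p q m0 ma : R) : 0 <= p -> 0 <= q -> ma <= m0 ->
  ma <= p / (p + q) * m0 + (1 - p / (p + q)) * ma <= m0.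
Proof.
move=> p0 q0 am; have /andP[a0 a1] := alpha01 p0 q0.
move: (p / (p + q)) a0 a1 => a a0 a1.
have h : 0 <= a * (m0 - ma) by apply: mulr_ge0; lra.
have h' : 0 <= (1 - a) * (m0 - ma) by apply: mulr_ge0; lra.
apply/andP; split; rewrite mulrBr mulrBl in h h'; lra.
Qed.

End K.


Section L.
Context {R : realType} (F : NEF R).
Local Notation D := (nef_Theta F).
Local Notation b := (nef_b F).
Local Notation b' := (derive1 (nef_b F)).
Local Notation th := (nef_theta F).
Local Notation kl := (kl F).
Local Notation M := (nef_means F).

Lemma lower (p q m0 ma l0 la : R) : 0 <= p -> 0 <= q -> M m0 -> M ma -> M l0 -> M la ->
  ma <= m0 -> l0 < la ->
  (p + q) * Ialpha F (p / (p + q)) m0 ma <= p * kl m0 l0 + q * kl ma la.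
Proof.
move=> p0 q0 M0 Ma Ml0 Mla am l0a.
have [V E] := Ialpha_val F m0 ma p0 q0.
have Hb := mb_between p0 q0 am.
move: V E Hb; set mb := (p / (p + q) * m0 + _) => V E /andP[amb mb0].
have Mb : M mb by apply: (means_itv Ma M0); rewrite amb mb0.
rewrite V.
have pq0 : 0 <= p + q by rewrite addr_ge0.
case: (leP mb l0) => h.
  have k1 : kl ma l0 <= kl ma la by apply: kl_up => //; rewrite (le_trans amb h) ltW.
  have k2 := kl_id F l0 E.
  have k3 : 0 <= (p + q) * kl mb l0 by rewrite mulr_ge0 // kl_ge0.
  have k4 : q * kl ma l0 <= q * kl ma la by rewrite ler_wpM2l.
  lra.
case: (leP la mb) => h2.
  have k1 : kl m0 la <= kl m0 l0 by apply: kl_down => //; rewrite (le_trans h2 mb0) ltW.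
  have k2 := kl_id F la E.
  have k3 : 0 <= (p + q) * kl mb la by rewrite mulr_ge0 // kl_ge0.
  have k4 : p * kl m0 la <= p * kl m0 l0 by rewrite ler_wpM2l.
  lra.
have k1 : kl m0 mb <= kl m0 l0 by apply: kl_down => //; rewrite mb0 ltW.
have k2 : kl ma mb <= kl ma la by apply: kl_up => //; rewrite amb ltW.
have k3 : p * kl m0 mb <= p * kl m0 l0 by rewrite ler_wpM2l.
have k4 : q * kl ma mb <= q * kl ma la by rewrite ler_wpM2l.
lra.
Qed.

End L.


Section U.
Context {R : realType} (F : NEF R).
Local Notation D := (nef_Theta F).
Local Notation b := (nef_b F).
Local Notation b' := (derive1 (nef_b F)).
Local Notation th := (nef_theta F).
Local Notation kl := (kl F).
Local Notation M := (nef_means F).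

Lemma upper (p q m0 ma e : R) : 0 <= p -> 0 <= q -> M m0 -> M ma -> ma <= m0 -> 0 < e ->
  exists t0 ta, [/\ D t0, D ta, t0 < ta &
    p * kl m0 (b' t0) + q * kl ma (b' ta) <= (p + q) * Ialpha F (p / (p + q)) m0 ma + e].
Proof.
move=> p0 q0 M0 Ma am e0.
have [V E] := Ialpha_val F m0 ma p0 q0.
have Hb := mb_between p0 q0 am.
move: V E Hb; set mb := (p / (p + q) * m0 + _) => V E /andP[amb mb0].
have Mb : M mb by apply: (means_itv Ma M0); rewrite amb mb0.
have [Dt et] := theta_spec Mb.
move: Dt et; set t := th mb => Dt et.
rewrite V -et.
set K := p + q + p * `|m0| + q * `|ma|.
have K0 : 0 <= K by rewrite /K !addr_ge0 ?mulr_ge0.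
set eta := e / (K + 1).
have K1 : K + 1 != 0 by rewrite gt_eqF // ltr_pwDr.
have eta0 : 0 < eta by rewrite divr_gt0 // ltr_pwDr.
have H5 : eta * K <= e.
  have -> : e = eta * (K + 1) by rewrite /eta divfK.
  by rewrite ler_pM2l // lerDl ler01.
have cb : {for t, continuous b}.
  by apply: differentiable_continuous; apply/derivable1_diffP; exact: nef_derivable.
have N : \forall s \near t, D s /\ `|b t - b s| < eta.
  near=> s; split; near: s.
    by apply: open_nbhs_nbhs; split; [exact: nef_open | exact: Dt].
  by move/cvgrPdist_lt : cb; apply.
case/nbhs_ballP: N => r r0 Hr.
set d := Num.min (r / 2) eta.
have d0 : 0 < d by rewrite lt_min divr_gt0.
have dr : d < r by rewrite gt_min ltr_pdivrMr // ltr_pMr // ltr1n.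
have deta : d <= eta by rewrite ge_min lexx orbT.
have [Dm bm] : D (t - d) /\ `|b t - b (t - d)| < eta.
  by apply: Hr; rewrite /ball /= opprB addrC subrK gtr0_norm.
have [Dp bp] : D (t + d) /\ `|b t - b (t + d)| < eta.
  by apply: Hr; rewrite /ball /= opprD addNKr normrN gtr0_norm.
exists (t - d), (t + d); split => //; first by rewrite ltrBlDr -addrA ltrDl addr_gt0.
rewrite !kl_b' //.
have H1 : p * (b (t - d) - b t) <= p * eta.
  by rewrite ler_wpM2l // (le_trans (ler_norm _)) // distrC ltW.
have H2 : q * (b (t + d) - b t) <= q * eta.
  by rewrite ler_wpM2l // (le_trans (ler_norm _)) // distrC ltW.
have H3 : p * (m0 * d) <= p * (`|m0| * eta).
  rewrite ler_wpM2l // (le_trans (ler_norm _)) // normrM (gtr0_norm d0).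
  by rewrite ler_wpM2l.
have H4 : q * (- (ma * d)) <= q * (`|ma| * eta).
  rewrite ler_wpM2l // (le_trans (ler_norm _)) // normrN normrM (gtr0_norm d0).
  by rewrite ler_wpM2l.
rewrite /K in H5.
lra.
Unshelve. all: by end_near.
Qed.

End U.


Lemma sum_split {R : realType} n (f : 'I_n.+1 -> R) (a : 'I_n.+1) : a != ord0 ->
  \sum_i f i = f ord0 + f a + \sum_(i | (i != ord0) && (i != a)) f i.
Proof. by move=> a0; rewrite (bigD1 ord0) //= (bigD1 a) //= addrA. Qed.

Lemma bigmin_leE {R : realType} n (G : 'I_n.+1 -> \bar R) (a : 'I_n.+1) : a != ord0 ->
  (\big[Order.min/+oo%E]_(i | i != ord0) G i <= G a)%E.
Proof. by move=> a0; apply: bigmin_le_cond. Qed.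

Unset Implicit Arguments.
Set Strict Implicit.
Theorem proposition3 (R : realType) (F : NEF R) (n : nat)
    (mu c : 'I_n.+1 -> R)
    (hmu : forall a, nef_means F (mu a))
    (hbest : forall a, a != ord0 -> mu a < mu ord0)
    (hc : forall a, 0 < c a) :
  (forall w, simplex w -> alt_obj F c mu w = pair_obj F c mu w) /\
  Tstar_inv F c mu = ereal_sup [set pair_obj F c mu w | w in simplex (n:=n)] /\
  (forall w, is_argmax (alt_obj F c mu) w <-> is_argmax (pair_obj F c mu) w).
Proof.
have H1 : forall w, simplex w -> alt_obj F c mu w = pair_obj F c mu w.
  move=> w [w0 _].
  have P0 i : 0 <= w i / c i by rewrite divr_ge0 // ltW.
  apply/eqP; rewrite eq_le; apply/andP; split.
    apply: le_bigmin; first exact: leey.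
    move=> a a0; apply/lee_addgt0Pr => e e0.
    have [t0 [ta [Dt0 Dta tlt H]]] := upper (P0 ord0) (P0 a) (hmu ord0) (hmu a)
       (ltW (hbest a a0)) e0.
    pose lam i := if i == ord0 then derive1 (nef_b F) t0
                  else if i == a then derive1 (nef_b F) ta else mu i.
    apply: ge_ereal_inf; exists (\sum_i (w i / c i) * kl F (mu i) (lam i))%:E.
      exists lam => //; split.
        move=> i; rewrite /lam; case: ifP => _; first by exists t0.
        by case: ifP => _; [exists ta | exact: hmu].
      exists a => //; rewrite /lam eqxx (negbTE a0) eqxx.
      exact: (nef_strict Dt0 Dta tlt).
    rewrite -EFinD lee_fin (sum_split _ a0) /lam eqxx (negbTE a0) eqxx.
    rewrite big1 ?addr0; last by move=> i /andP[/negbTE -> /negbTE ->]; rewrite kl_self mulr0.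
    exact: H.
  apply: le_ereal_inf_tmp => _ [lam [Mlam [a a0 la]] <-].
  rewrite /pair_obj; apply: le_trans (bigmin_leE _ a0) _.
  rewrite lee_fin (sum_split _ a0).
  have S0 : 0 <= \sum_(i | (i != ord0) && (i != a)) w i / c i * kl F (mu i) (lam i).
    by apply: sumr_ge0 => i _; rewrite mulr_ge0 // kl_ge0.
  have := lower (P0 ord0) (P0 a) (hmu ord0) (hmu a) (Mlam ord0) (Mlam a)
       (ltW (hbest a a0)) la.
  move=> L; apply: le_trans L _; rewrite lerDl //.
have Himg : [set alt_obj F c mu w | w in simplex (n:=n)] =
            [set pair_obj F c mu w | w in simplex (n:=n)].
  by apply/seteqP; split => _ [w sw <-]; exists w => //; rewrite H1.
split => //; split; first by rewrite /Tstar_inv Himg.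
move=> w; split => -[sw e]; split => //.
  by rewrite -H1 // e Himg.
by rewrite H1 // e Himg.
Qed.
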